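(* Let $n\ge 1$ and let $p=p_1\cdots p_n$ be a permutation of $\{1,\dots,n\}$ with $p_n=1$. Then the following are equivalent: (A) $p$ is strongly 312-avoiding; (B) there is an integer $k$ with $n/2\le k\le n$ such that $p=(k+1)(k+2)\cdots n\; k(k-1)\cdots 2\,1$, i.e. $p$ lists the $n-k$ largest values in increasing order followed by the $k$ smallest values in decreasing order.
   Context: Permutations are written in one-line notation $p=p_1\cdots p_n$ with $p_i=p(i)$. $p$ contains a pattern $q=q_1\cdots q_m$ if there are indices $i_1<\cdots<i_m$ with $p_{i_r}<p_{i_s}$ iff $q_r<q_s$; otherwise $p$ avoids $q$. $p^2(i)=p(p(i))$. A permutation $p$ is strongly $q$-avoiding if both $p$ and $p^2$ avoid $q$. *)

(* Defs.v *)
From mathcomp Require Import all_boot all_fingroup.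
Set Implicit Arguments. Unset Strict Implicit. Unset Printing Implicit Defensive.

(* One-line notation: for p : {perm 'I_n}, position i (0-based) holds the
   value (val (p i)).+1 in {1..n}.  Patterns are given in one-line notation
   as sequences of naturals. *)
Definition perm_val n (p : {perm 'I_n}) (i : nat) : nat :=
  match insub i with Some j => (val (p j)).+1 | None => 0 end.

Definition contains n (p : {perm 'I_n}) (q : seq nat) : Prop :=
  exists f : 'I_(size q) -> 'I_n,
    (forall r s : 'I_(size q), r < s -> f r < f s) /\
    (forall r s : 'I_(size q),
        (val (p (f r)) < val (p (f s))) = (nth 0 q r < nth 0 q s)).

Definition avoids n (p : {perm 'I_n}) (q : seq nat) : Prop := ~ contains p q.

Definition strongly_avoids n (p : {perm 'I_n}) (q : seq nat) : Prop :=
  avoids p q /\ avoids (p * p)%g q.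

(* Main.v *)
Require Import Defs.
From mathcomp Require Import all_boot all_fingroup zify.
Set Implicit Arguments. Unset Strict Implicit.

Lemma pigeon (f : nat -> nat) a b c d :
  (forall x, a <= x < b -> c <= f x < d) ->
  (forall x y, a <= x < b -> a <= y < b -> f x = f y -> x = y) ->
  b - a <= d - c.
Proof.
move=> Hr Hi.
have Hg : forall i : 'I_(b - a), f (a + i) - c < d - c.
  move=> i; have := Hr (a + i); have := ltn_ord i; lia.
pose g := fun i : 'I_(b - a) => Ordinal (Hg i).
have gi : injective g.
  move=> i j /(congr1 val) /= h; apply: val_inj => /=.
  have := ltn_ord i; have := ltn_ord j => hi hj.
  have := Hr (a + i); have := Hr (a + j) => r1 r2.
  have := Hi (a + i) (a + j); lia.
have := leq_card g gi; rewrite !card_ord; done.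
Qed.

Lemma chain_inc (f : nat -> nat) a b :
  (forall x y, a <= x -> x < y -> y <= b -> f x < f y) ->
  forall x y, a <= x -> x <= y -> y <= b -> f x + (y - x) <= f y.
Proof.
move=> H x y ha hxy hb.
have [d e] : exists d, y = x + d by exists (y - x); lia.
subst y.
clear hxy.
elim: d hb => [|d IH] hb; first by rewrite !addn0 subnn addn0.
have := IH ltac:(lia); have := H (x + d) (x + d.+1); rewrite !addnS; lia.
Qed.

Lemma chain_dec (f : nat -> nat) a b :
  (forall x y, a <= x -> x < y -> y <= b -> f y < f x) ->
  forall x y, a <= x -> x <= y -> y <= b -> f y + (y - x) <= f x.
Proof.
move=> H x y ha hxy hb.
have [d e] : exists d, y = x + d by exists (y - x); lia.
subst y.
clear hxy.
elim: d hb => [|d IH] hb; first by rewrite !addn0 subnn addn0.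
have := IH ltac:(lia); have := H (x + d) (x + d.+1); rewrite !addnS; lia.
Qed.

Lemma main_AB N (P : nat -> nat) :
 (forall i, i < N -> P i < N) ->
 (forall i j, i < N -> j < N -> P i = P j -> i = j) ->
 (forall v, v < N -> exists2 i, i < N & P i = v) ->
 0 < N -> P (N - 1) = 0 ->
 (forall i j l, i < j -> j < l -> l < N -> P j < P l -> P l < P i -> False) ->
 (forall i j l, i < j -> j < l -> l < N -> P (P j) < P (P l) -> P (P l) < P (P i) -> False) ->
 exists k, [/\ N <= 2 * k, k <= N &
   forall i, i < N -> P i = if i < N - k then k + i else N - 1 - i].
Proof.
move=> HP Hinj Hsurj HN Hlast Av1 Av2.
have [M HM PM] := Hsurj (N - 1) ltac:(lia).
have [eM|ltM] : M = N - 1 \/ M < N - 1 by lia.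
  have e0 : N - 1 = 0 by have h := Hlast; rewrite -eM PM in h.
  exists 1; split; try lia.
  move=> i hi; have -> : i = 0 by lia.
  have h0 : P 0 = 0 by rewrite -[X in P X]e0.
  by rewrite h0 e0.
have Qinj : forall i j, i < N -> j < N -> P (P i) = P (P j) -> i = j.
  move=> i j hi hj h; apply: (Hinj) => //; apply: (Hinj) => //; exact: HP.
have QM : P (P M) = 0 by rewrite PM.
have F1 : forall x y, M < x -> x < y -> y < N -> P y < P x.
  move=> x y h1 h2 h3.
  have := Av1 M x y h1 h2 h3; have := Hinj x y; have := Hinj y M; have := HP y.
  lia.
have F2 : forall i j, i < M -> M < j -> j < N -> P (P i) < P (P j).
  move=> i j h1 h2 h3.
  have := Av2 i M j h1 h2 h3; have := Qinj i j; have := Qinj j M; lia.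
have [y0 Hy0 Py0] := Hsurj M ltac:(lia).
have y0M : M < y0.
  have : y0 <> M by move=> e; move: Py0; rewrite e PM; lia.
  have : ~ y0 < M.
    move=> h; have := F2 y0 (N - 1) h ltac:(lia) ltac:(lia).
    rewrite Py0 PM; have := HP (P (N - 1)) (HP (N - 1) ltac:(lia)); lia.
  lia.
have S2 : M < P 0.
  have [eM0|M0] : M = 0 \/ 0 < M by lia.
    rewrite -eM0 PM; lia.
  have e : P (P (N - 1)) = P 0 by rewrite Hlast.
  have : ~ P 0 <= M.
    move=> h.
    have := @pigeon (fun x => P (P x)) 0 M 1 M.
    have H1 : forall x, 0 <= x < M -> 1 <= P (P x) < M.
      move=> x hx; have := F2 x (N - 1) ltac:(lia) ltac:(lia) ltac:(lia).
      have := Qinj x M; lia.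
    have H2 : forall x y, 0 <= x < M -> 0 <= y < M -> P (P x) = P (P y) -> x = y.
      move=> x y hx hy; apply: (Qinj); lia.
    move=> /(_ H1 H2); lia.
  lia.
have S3 : forall x y, 0 < x -> x < y -> y < N -> P x < P 0 -> P y < P 0 -> P y < P x.
  move=> x y h1 h2 h3 h4 h5; have := Av1 0 x y h1 h2 h3; have := Hinj x y; lia.
have S4 : forall i, i <= M -> M < P i.
  move=> i hi.
  have [->|[->|hh]] : i = M \/ i = 0 \/ 0 < i < M by lia.
  - lia.
  - done.
  have : ~ P i <= M.
    move=> h.
    have : P i <> M by move=> e; have := Hinj i y0; lia.
    have := S3 i y0; lia.
  lia.
have S5 : M.+1 <= N - M.+1.
  have := @pigeon P 0 M.+1 M.+1 N.
  have H1 : forall x, 0 <= x < M.+1 -> M.+1 <= P x < N.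
    move=> x hx; have := S4 x; have := HP x; lia.
  have H2 : forall x y, 0 <= x < M.+1 -> 0 <= y < M.+1 -> P x = P y -> x = y.
    move=> x y hx hy; apply: (Hinj); lia.
  move=> /(_ H1 H2); lia.
have DEC : forall x, M < x < N -> N - 1 - x <= P x.
  move=> x hx.
  have := @chain_dec P M.+1 (N - 1) ltac:(move=> *; apply: (F1); lia) x (N - 1).
  rewrite Hlast; lia.
have S6step : forall v, v <= M -> (forall i, i < v -> P (N - 1 - i) = i) -> P (N - 1 - v) = v.
  move=> v hv IH.
  have [y Hy Pyv] := Hsurj v ltac:(lia).
  have yM : M < y by have := S4 y; lia.
  have := DEC y ltac:(lia).
  have : ~ N - 1 - v < y.
    move=> h; have := IH (N - 1 - y) ltac:(lia).
    have -> : N - 1 - (N - 1 - y) = y by lia.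
    lia.
  move=> h1 h2; have -> : N - 1 - v = y by lia.
  done.
have S6 : forall j, j <= M -> P (N - 1 - j) = j.
  have : forall v, v <= M -> forall i, i <= v -> P (N - 1 - i) = i.
    elim=> [|v IH] hv i hi.
      have -> : i = 0 by lia.
      apply: (S6step) => //; lia.
    have [hi'|->] : i <= v \/ i = v.+1 by lia.
      apply: IH; lia.
    apply: (S6step) => // i0 h0; apply: IH; lia.
  move=> H0 jj hj; exact: (H0 jj hj jj (leqnn jj)).
set k := N - 1 - M.
have Qk : P (P k) = N - 1 by rewrite /k S6 // PM.
have S7 : forall i j, i < j -> j < M -> P i < P j.
  move=> i j h1 h2.
  have := Av2 k (N - 1 - j) (N - 1 - i) ltac:(lia) ltac:(lia) ltac:(lia).
  rewrite !S6; try lia.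
  rewrite ?Qk ?PM.
  have := Hinj i j; have := Hinj i M; have := HP i; lia.
have S9 : forall i, i < M -> P i = k + i.
  move=> i hi.
  have S8 : k <= P 0.
    have : ~ M < P (P 0).
      move=> h.
      have := @pigeon (fun x => P (P x)) M.+1 N (P (P 0)).+1 N.
      have H1 : forall x, M.+1 <= x < N -> (P (P 0)).+1 <= P (P x) < N.
        move=> x hx; have := F2 0 x ltac:(lia) ltac:(lia) ltac:(lia).
        have := HP (P x) (HP x ltac:(lia)); lia.
      have H2 : forall x y, M.+1 <= x < N -> M.+1 <= y < N -> P (P x) = P (P y) -> x = y.
        move=> x y hx hy; apply: (Qinj); lia.
      move=> /(_ H1 H2); lia.
    move=> h.
    have e := S6 (P (P 0)) ltac:(lia).
    have := Hinj (N - 1 - P (P 0)) (P 0) ltac:(lia) (HP 0 ltac:(lia)) e.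
    lia.
  have := @chain_inc P 0 (M - 1) ltac:(move=> *; apply: (S7); lia) 0 i.
  have := @chain_inc P 0 (M - 1) ltac:(move=> *; apply: (S7); lia) i (M - 1).
  have := Hinj (M - 1) M; have := HP (M - 1).
  lia.
have S10 : forall x, M < x < N -> P x = N - 1 - x.
  move=> x hx.
  have := DEC x hx.
  have := @chain_dec P M.+1 (N - 1) ltac:(move=> *; apply: (F1); lia) M.+1 x.
  have : P M.+1 < k.
    have : ~ k <= P M.+1.
      move=> h.
      have [e|lt] : P M.+1 = N - 1 \/ P M.+1 < N - 1 by have := HP M.+1; lia.
        have := Hinj M.+1 M; lia.
      have e := S9 (P M.+1 - k) ltac:(lia).
      have := Hinj (P M.+1 - k) M.+1 ltac:(lia) ltac:(lia).
      lia.
    lia.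
  lia.
exists k; split; try lia.
move=> i hi.
case: ifP => h.
  have [->|lt] : i = M \/ i < M by lia.
    lia.
  exact: S9.
apply: (S10); lia.
Qed.

Lemma main_BA N (P : nat -> nat) k :
  N <= 2 * k -> k <= N ->
  (forall i, i < N -> P i = if i < N - k then k + i else N - 1 - i) ->
  (forall i j l, i < j -> j < l -> l < N -> P j < P l -> P l < P i -> False) /\
  (forall i j l, i < j -> j < l -> l < N -> P (P j) < P (P l) -> P (P l) < P (P i) -> False).
Proof.
move=> h1 h2 HF.
have HQ : forall i, i < N -> P (P i) =
   if i < N - k then N - 1 - (k + i) else if N - 1 - i < N - k then k + (N - 1 - i) else i.
  move=> i hi; rewrite (HF i hi).
  case: ifP => c1; rewrite HF; try lia; by repeat case: ifP; lia.
split=> i j l hij hjl hl.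
  rewrite !HF; try lia.
  by repeat case: ifP; lia.
rewrite !HQ; try lia.
by repeat case: ifP; lia.
Qed.

Lemma pv n (p : {perm 'I_n.+1}) i : i < n.+1 ->
  perm_val p i = (val (p (inord i))).+1.
Proof.
move=> hi; rewrite /perm_val.
case: insubP => [j _ hj|]; last by rewrite hi.
by rewrite -hj inord_val.
Qed.

Lemma contains312 n (p : {perm 'I_n.+1}) :
  contains p [:: 3; 1; 2] <->
  exists i j l, [/\ i < j, j < l, l < n.+1,
    val (p (inord j)) < val (p (inord l)) & val (p (inord l)) < val (p (inord i))].
Proof.
split.
  case=> f [H1 H2].
  pose o0 : 'I_(size [:: 3; 1; 2]) := @Ordinal 3 0 isT.
  pose o1 : 'I_(size [:: 3; 1; 2]) := @Ordinal 3 1 isT.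
  pose o2 : 'I_(size [:: 3; 1; 2]) := @Ordinal 3 2 isT.
  exists (val (f o0)), (val (f o1)), (val (f o2)).
  rewrite !inord_val; split; [exact: H1|exact: H1|exact: ltn_ord|by rewrite (H2 o1 o2)|by rewrite (H2 o2 o0)].
case=> i [j [l [hij hjl hl h1 h2]]].
have h1' : nat_of_ord (p (inord j)) < nat_of_ord (p (inord l)) := h1.
have h2' : nat_of_ord (p (inord l)) < nat_of_ord (p (inord i)) := h2.
exists (fun r : 'I_(size [:: 3; 1; 2]) => inord (nth 0 [:: i; j; l] r) : 'I_n.+1).
split.
  case=> [[|[|[|r]]] hr] // [[|[|[|s]]] hs] //= _; rewrite !inordK //; lia.
case=> [[|[|[|r]]] hr] // [[|[|[|s]]] hs] //=; try rewrite ltnn //; lia.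
Qed.

Theorem theorem3p1 (n : nat) (p : {perm 'I_n}) :
  1 <= n ->
  perm_val p n.-1 = 1 ->
  (strongly_avoids p [:: 3; 1; 2] <->
   exists k : nat,
     [/\ n <= 2 * k, k <= n &
      forall i : nat, i < n ->
        perm_val p i = (if i < n - k then k + i + 1 else n - i)]).
Proof.
case: n p => [|n] p hn; first by [].
move=> hlast.
pose P := fun i => val (p (inord i)).
have PQ : forall i, val ((p * p)%g (inord i)) = P (P i).
  by move=> i; rewrite permM /P inord_val.
have HP : forall i, i < n.+1 -> P i < n.+1 by move=> i _; exact: ltn_ord.
have Hinj : forall i j, i < n.+1 -> j < n.+1 -> P i = P j -> i = j.
  move=> i j hi hj e; have := congr1 val (perm_inj (val_inj e)); rewrite /= !inordK //.
have Hsurj : forall v, v < n.+1 -> exists2 i, i < n.+1 & P i = v.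
  move=> v hv; exists (val ((p^-1)%g (inord v))); first exact: ltn_ord.
  by rewrite /P /= inord_val permKV inordK.
have Hlast : P (n.+1 - 1) = 0.
  move: hlast; rewrite pv //= subn1 /= => -[] //.
split.
  case=> A1 A2.
  have Av1 : forall i j l, i < j -> j < l -> l < n.+1 -> P j < P l -> P l < P i -> False.
    move=> i j l h1 h2 h3 h4 h5; apply: A1; apply/contains312.
    by exists i, j, l; split.
  have Av2 : forall i j l, i < j -> j < l -> l < n.+1 ->
      P (P j) < P (P l) -> P (P l) < P (P i) -> False.
    move=> i j l h1 h2 h3 h4 h5; apply: A2; apply/contains312.
    by exists i, j, l; rewrite !PQ; split.
  have [k [k1 k2 k3]] := main_AB HP Hinj Hsurj (ltn0Sn n) Hlast Av1 Av2.
  exists k; split => // i hi.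
  rewrite pv // -/(P i) k3 //.
  by case: ifP => _; lia.
case=> k [k1 k2 k3].
have HF : forall i, i < n.+1 -> P i = if i < n.+1 - k then k + i else n.+1 - 1 - i.
  move=> i hi; have := k3 i hi; rewrite pv // -/(P i).
  by case: ifP => _; lia.
have [B1 B2] := main_BA k1 k2 HF.
split.
  move/contains312 => [i [j [l [h1 h2 h3 h4 h5]]]].
  exact: (B1 i j l).
move/contains312 => [i [j [l [h1 h2 h3 h4 h5]]]].
rewrite !PQ in h4 h5.
exact: (B2 i j l).
Qed.
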